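(* For every $n\in\mathbb{N}$, both $10^{-n}\det[b_{i+j}]_{0\le i,j\le n}$ and $24^{-n}\det[A_{i+j}]_{0\le i,j\le n}$ are integers.
   Context: For $m\in\mathbb{N}$, the Apéry numbers are $b_m=\sum_{k=0}^m\binom{m}{k}^2\binom{m+k}{k}$ and $A_m=\sum_{k=0}^m\binom{m}{k}^2\binom{m+k}{k}^2$. For a sequence $(a_m)_{m\ge0}$, $\det[a_{i+j}]_{0\le i,j\le n}$ denotes the determinant of the $(n+1)\times(n+1)$ Hankel matrix with $(i,j)$-entry $a_{i+j}$. *)

(* Defs.v *)
From HB Require Import structures.
From mathcomp Require Import all_boot all_order all_algebra.
Set Implicit Arguments. Unset Strict Implicit. Unset Printing Implicit Defensive.
Import Order.TTheory GRing.Theory Num.Theory.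

Definition apery_b (m : nat) : nat :=
  \sum_(0 <= k < m.+1) 'C(m, k) ^ 2 * 'C(m + k, k).

Definition apery_A (m : nat) : nat :=
  \sum_(0 <= k < m.+1) 'C(m, k) ^ 2 * 'C(m + k, k) ^ 2.

Definition hankel_det (a : nat -> nat) (n : nat) : int :=
  \det (\matrix_(i < n.+1, j < n.+1) (Posz (a (i + j)%N))).

(* Main.v *)
Require Import Defs.
From mathcomp Require Import all_boot all_order all_algebra.
From mathcomp Require Import zify ring.
Set Implicit Arguments. Unset Strict Implicit. Unset Printing Implicit Defensive.
Import Order.TTheory GRing.Theory Num.Theory.
Local Open Scope ring_scope.

Lemma coef_binom (R : nzSemiRingType) n k :
  ((('X + 1 : {poly R}) ^+ n)`_k) = 'C(n, k)%:R.
Proof.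
rewrite exprD1n coef_sum.
under eq_bigr do rewrite coefMn coefXn.
case: (ltnP n k)%N => Hk.
  rewrite bin_small // big1 // => i _.
  by rewrite (_ : (k == i) = false) ?mul0rn // ; apply/negbTE; rewrite neq_ltn (leq_ltn_trans (leq_ord i) Hk) orbT.
rewrite (bigD1 (Ordinal (_ : (k < n.+1)%N))) //= eqxx mulr1n big1 ?addr0 // => i Hi.
by rewrite (_ : (k == i) = false) ?mul0rn //; apply/negbTE; rewrite eq_sym; apply: contra Hi => /eqP h; apply/eqP/val_inj.
Qed.

Lemma lucas p a r c s : prime p -> (r < p)%N -> (s < p)%N ->
  ('C(p * a + r, p * c + s)%:R : 'F_p) = 'C(a, c)%:R * 'C(r, s)%:R.
Proof.
move=> pp rp sp.
have p0 : (0 < p)%N by exact: prime_gt0.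
set P := ('X + 1 : {poly 'F_p}).
have chP : p \in [pchar {poly 'F_p}] by rewrite pchar_poly pchar_Fp.
have Pp : P ^+ p = 'X ^+ p + 1.
  rewrite -(pFrobenius_autE chP) pFrobenius_autD_comm; last exact: mulrC.
  by rewrite !pFrobenius_autE expr1n.
have Ha : forall a, ('X ^+ p + 1) ^+ a = P ^+ a \Po 'X ^+ p.
  elim=> [|b IH]; first by rewrite !expr0 -polyC1 comp_polyC.
  by rewrite !exprS comp_polyM IH /P comp_polyD comp_polyX -polyC1 comp_polyC.
rewrite -!coef_binom -/P exprD exprM Pp Ha coefM.
have hk : (p * c < (p * c + s).+1)%N by rewrite ltnS leq_addr.
rewrite (bigD1 (Ordinal hk)) //= coef_comp_poly_Xn // dvdn_mulr // mulKn //.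
rewrite addKn big1 ?addr0 // => i Hi.
rewrite coef_comp_poly_Xn //; case: ifP => [/dvdnP [j Hj]|_]; last by rewrite mul0r.
rewrite [(P ^+ r)`_ _]coef_binom (@bin_small r) ?mulr0 //.
have Hi2 : (i < (p * c + s).+1)%N := ltn_ord i.
have Hne : (i : nat) <> (p * c)%N by move=> h; move: Hi; rewrite -(inj_eq val_inj) /= h eqxx.
have Hjc : (j < c)%N.
  have : (j * p < p * (c + 1))%N by lia.
  rewrite mulnC ltn_pmul2l // addn1 ltnS leq_eqVlt => /orP [/eqP h|//].
  by exfalso; apply: Hne; rewrite Hj h mulnC.
have : (p * j.+1 <= p * c)%N by rewrite leq_mul2l Hjc orbT.
rewrite mulnS Hj (mulnC j) => h. lia.
Qed.

Lemma lucas2 p a c r s : prime p -> (r < p)%N -> (s < p)%N ->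
  ('C(p * a + r + (p * c + s), p * c + s)%:R : 'F_p) =
  'C(a + c, c)%:R * 'C(r + s, s)%:R.
Proof.
move=> pp rp sp.
case: (ltnP (r + s) p) => h.
  rewrite (_ : (p * a + r + (p * c + s) = p * (a + c) + (r + s))%N); last by rewrite mulnDr; lia.
  by rewrite lucas.
have ht : (r + s - p < p)%N by lia.
have hts : (r + s - p < s)%N by lia.
rewrite (_ : (p * a + r + (p * c + s) = p * (a + c + 1) + (r + s - p))%N); last by rewrite !mulnDr muln1; lia.
rewrite lucas // (bin_small hts) mulr0.
have := lucas 1 0 pp ht sp; rewrite muln0 add0n muln1 (bin_small hts) mulr0.
by rewrite (_ : (p + (r + s - p) = r + s)%N) ?mulr0 //; [move=> ->; rewrite mulr0 | lia].
Qed.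

Definition T (e m k : nat) : nat := 'C(m, k) ^ 2 * 'C(m + k, k) ^ e.
Definition ap (e m : nat) : nat := \sum_(0 <= k < m.+1) T e m k.

Lemma ap_ext e m N : (m < N)%N -> ap e m = \sum_(0 <= k < N) T e m k.
Proof.
move=> mN; rewrite /ap [RHS](big_cat_nat _ (n := m.+1)) //=.
rewrite [X in _ = _ + X]big1_seq; first by rewrite addr0.
move=> k /andP [_]; rewrite mem_index_iota => /andP [h _].
by rewrite /T (bin_small h).
Qed.

Lemma sum_split (R : nmodType) p (F : nat -> R) n :
  \sum_(0 <= k < p * n) F k = \sum_(0 <= c < n) \sum_(0 <= s < p) F (p * c + s)%N.
Proof.
elim: n => [|n IH]; first by rewrite muln0 !big_geq.
rewrite big_nat_recr //= -IH mulnS addnC (big_cat_nat _ (n := (p * n)%N)) ?leq_addr //=.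
congr (_ + _).
rewrite -{1}(add0n (p * n)%N) big_addn addKn.
by apply: eq_bigr => i _; rewrite addnC.
Qed.

Lemma gessel e p a r : prime p -> (r < p)%N ->
  ((ap e (p * a + r))%:R : 'F_p) = (ap e a)%:R * (ap e r)%:R.
Proof.
move=> pp rp.
have p0 : (0 < p)%N by exact: prime_gt0.
rewrite (@ap_ext e (p * a + r) (p * a.+1)); last by rewrite mulnS; lia.
rewrite (@ap_ext e r p) // natr_sum sum_split /ap natr_sum big_distrl /=.
apply: eq_bigr => c _; rewrite natr_sum big_distrr /=.
apply: eq_big_nat => s /andP [_ sp].
rewrite /T !natrM !natrX lucas // lucas2 //.
by rewrite !exprMn; ring.
Qed.

Lemma Fp_eq p x y : prime p -> (x %% p = y %% p)%N -> (x%:R : 'F_p) = y%:R.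
Proof. by move=> pp h; rewrite -(Fp_nat_mod pp) h Fp_nat_mod. Qed.

Lemma Fp_eqE p x y : prime p -> (x%:R : 'F_p) = y%:R -> (x %% p = y %% p)%N.
Proof. by move=> pp h; have := congr1 (@nat_of_ord _) h; rewrite !(val_Fp_nat pp). Qed.

Lemma ap_pow e p c : prime p ->
  (forall r, (r < p)%N -> (ap e r %% p = c ^ r %% p)%N) ->
  (c ^ p %% p = c %% p)%N ->
  forall m, (ap e m %% p = c ^ m %% p)%N.
Proof.
move=> pp Hb Hf m; apply: Fp_eqE => //.
have p1 : (1 < p)%N by exact: prime_gt1.
elim: m {-2}m (leqnn m) => [|n IH] m Hm.
  by move: Hm; rewrite leqn0 => /eqP ->; apply: Fp_eq => //; apply: Hb; exact: prime_gt0.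
case: (ltnP m p) => hmp; first by apply: Fp_eq => //; apply: Hb.
rewrite (divn_eq m p) mulnC gessel ?ltn_mod ?prime_gt0 //.
rewrite IH; last first.
  have : (m %/ p < m)%N by rewrite ltn_Pdiv // (leq_trans _ hmp) // prime_gt0.
  by move=> h; rewrite -ltnS (leq_trans h).
rewrite (@Fp_eq p (ap e (m %% p)) (c ^ (m %% p))) ?Hb ?ltn_mod ?prime_gt0 //.
rewrite -natrM -expnD; apply: Fp_eq => //.
have h : (c ^ (p * (m %/ p)) %% p = c ^ (m %/ p) %% p)%N by rewrite expnM -modnXm Hf modnXm.
by rewrite !expnD -[in RHS]modnMml h modnMml.
Qed.

Lemma sq_even8 t : ~~ odd t -> (t ^ 2 %% 8 = (2 * t) %% 8)%N.
Proof.
move=> h; have [u ->] : exists u, t = (2 * u)%N by exists t./2; rewrite -{1}(odd_double_half t) (negbTE h) add0n -muln2 mulnC.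
have [v [->|->]] : exists v, (u = 2 * v \/ u = 2 * v + 1)%N.
  exists u./2; rewrite -{1 3}(odd_double_half u) -muln2 mulnC; case: (odd u); [right|left]; lia.
- rewrite (_ : ((2 * (2 * v)) ^ 2 = 8 * (2 * v * v))%N); last by rewrite expnS expn1; nia.
  by rewrite (_ : (2 * (2 * (2 * v)) = 8 * v)%N) ?modnMr //; lia.
- rewrite (_ : ((2 * (2 * v + 1)) ^ 2 = 8 * (2 * v * v + 2 * v) + 4)%N); last by rewrite expnS expn1; nia.
  by rewrite (_ : (2 * (2 * (2 * v + 1)) = 8 * v + 4)%N) ?modnMDl //; lia.
Qed.

Lemma bin_mid_even k : (0 < k)%N -> ~~ odd 'C(k.*2, k).
Proof.
case: k => // k _.
rewrite doubleS binS.
have -> : 'C(k.*2.+1, k.+1) = 'C(k.*2.+1, k).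
  have e : (k.*2.+1 - k = k.+1)%N by lia.
  rewrite -e bin_sub //; lia.
by rewrite addnn odd_double.
Qed.

Lemma t_ident m k : (k <= m)%N ->
  ('C(m, k) * 'C(m + k, k) = 'C(m + k, k.*2) * 'C(k.*2, k))%N.
Proof.
move=> km.
apply/eqP; rewrite -(@eqn_pmul2r (k`! * k`! * (m - k)`!)); last by rewrite !muln_gt0 !fact_gt0.
have h1 := bin_fact km.
have h2 := bin_fact (leq_addl m k); rewrite addnK in h2.
have h3 : (k.*2 <= m + k)%N by lia.
have h4 := bin_fact h3; rewrite (_ : (m + k - k.*2 = m - k)%N) in h4; last by lia.
have h5 := bin_fact (leq_addr k k : (k <= k + k)%N); rewrite addKn addnn in h5.
apply/eqP; transitivity (m + k)`!.
  rewrite -h2 -h1; lia.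
rewrite -h4 -h5; lia.
Qed.

Definition Dl (m : nat) : nat := \sum_(0 <= k < m.+1) 'C(m, k) * 'C(m + k, k).

Lemma Dl_coef (R : comNzRingType) m :
  ((Dl m)%:R : R) = ((('X + 1) ^+ m * (('X + 1) + 1) ^+ m : {poly R})`_m).
Proof.
rewrite [X in _ * X]exprD1n mulr_sumr coef_sum /Dl natr_sum big_mkord.
apply: eq_bigr => i _.
rewrite mulrnAr -exprD coefMn coef_binom -mulrnA; congr (_%:R).
rewrite mulnC; congr (_ * _)%N.
by rewrite -(bin_sub (leq_addl m i)) addnK.
Qed.

Lemma Dl_mod4 m : (Dl m %% 4 = if odd m then 3 else 1)%N.
Proof.
have h := @Dl_coef 'Z_4 m.
set P := ('X + 1 : {poly 'Z_4}) in h.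
have h4 : (4%:R : {poly 'Z_4}) = 0.
  by rewrite -polyC_natr (_ : (4%:R : 'Z_4) = 0) ?polyC0 // -(Zp_nat_mod (_ : (1 < 4)%N)) // modnn.
have hQ : (P + 1) ^+ 2 = 'X ^+ 2.
  transitivity ('X ^+ 2 + 4%:R * ('X + 1) : {poly 'Z_4}); first by rewrite /P; ring.
  by rewrite h4 mul0r addr0.
rewrite -[X in (P + 1) ^+ X](odd_double_half m) in h.
rewrite exprD -mul2n exprM hQ -exprM mul2n mulrA coefMXn in h.
rewrite ifF in h; last by rewrite -{1}(odd_double_half m) ltnNge leq_addl.
have e : (m - m./2.*2 = odd m)%N by rewrite -{1}(odd_double_half m) addnK.
rewrite e in h.
have hm := odd_double_half m; rewrite -muln2 in hm.
case: (odd m) h hm => h hm.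
- rewrite mulrDr mulr1 coefD -exprSr !coef_binom bin1 -natrD in h.
  have := congr1 (@nat_of_ord _) h; rewrite !val_Zp_nat // => ->.
  rewrite (_ : 'C(m, true) = m); [lia | exact: bin1].
- rewrite mulr1 coef_binom bin0 in h.
  have := congr1 (@nat_of_ord _) h; rewrite !val_Zp_nat // => ->.
Qed.


Lemma ap2_mod8 m : (ap 2 m %% 8 = if odd m then 5 else 1)%N.
Proof.
have Zeq : forall x y, (x %% 8 = y %% 8)%N -> (x%:R : 'Z_8) = y%:R.
  by move=> x y h; rewrite -(Zp_nat_mod (_ : (1 < 8)%N)) // h Zp_nat_mod.
pose t k := ('C(m, k) * 'C(m + k, k))%N.
have Ht : forall k, (0 < k)%N -> (k <= m)%N -> ((T 2 m k)%:R : 'Z_8) = 2%:R * (t k)%:R.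
  move=> k k0 km; rewrite -natrM; apply: Zeq.
  rewrite /T -expnMn sq_even8 // /t t_ident // oddM negb_and bin_mid_even ?orbT //.
have H : ((ap 2 m)%:R + 1 : 'Z_8) = 2%:R * (Dl m)%:R.
  rewrite /ap /Dl !natr_sum !(big_ltn (ltn0Sn m)).
  rewrite /T addn0 bin0 muln1.
  rewrite (@eq_big_nat _ _ _ 1 m.+1 (fun i => ('C(m, i) ^ 2 * 'C(m + i, i) ^ 2)%:R) (fun k => 2%:R * (t k)%:R)); last first.
    by move=> k /andP [k0 km]; exact: Ht.
  rewrite -mulr_sumr /t; ring.
have H' : (((ap 2 m + 1)%N)%:R : 'Z_8) = ((2 * Dl m)%N)%:R by rewrite natrD natrM.
have := congr1 (@nat_of_ord _) H'; rewrite !val_Zp_nat => [h||] //.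
have := Dl_mod4 m; case: (odd m) => h2; lia.
Qed.

Lemma hankel_dvd (a : nat -> nat) (c d : int) n :
  (forall m, (d %| (a m.+1)%:Z - c * (a m)%:Z)%Z) ->
  exists z : int, hankel_det a n = d ^+ n * z.
Proof.
move=> Hd.
pose q m := (((a m.+1)%:Z - c * (a m)%:Z) %/ d)%Z.
pose M : 'M[int]_n.+1 := \matrix_(i < n.+1, j < n.+1) (Posz (a (i + j)%N)).
pose L : 'M[int]_n.+1 := \matrix_(i < n.+1, j < n.+1)
   (if i == j then 1 else if (i == j.+1 :> nat) then - c else 0).
pose N : 'M[int]_n.+1 := \matrix_(i < n.+1, j < n.+1)
   (if (i == 0 :> nat) then Posz (a j) else q (i.-1 + j)%N).
pose D : 'rV[int]_n.+1 := \row_(i < n.+1) (if (i == 0 :> nat) then 1 else d).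
have HL : \det L = 1.
  rewrite det_trig; last first.
    apply/forallP => i; apply/forallP => j; apply/implyP => lij.
    rewrite mxE; case: (i =P j) => [h|_]; first by move: lij; rewrite h ltnn.
    case: (@eqP nat i j.+1) => [h|_] //; by move: lij; rewrite h ltnNge leqnSn.
  by rewrite big1 // => i _; rewrite mxE eqxx.
have HD : \prod_(i < n.+1) D 0 i = d ^+ n.
  rewrite big_ord_recl mxE /= mul1r.
  under eq_bigr do rewrite mxE /=.
  by rewrite prodr_const card_ord.
have HLM : L *m M = diag_mx D *m N.
  rewrite mul_diag_mx; apply/matrixP => i k; rewrite !mxE.
  rewrite (bigD1 i) //= !mxE eqxx mul1r.
  case: i => [[|i] Hi] /=.
  - rewrite big1 ?addr0 ?mul1r //= => j Hj.
    by rewrite !mxE eq_sym (negbTE Hj) /= mul0r.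
  - pose j0 : 'I_n.+1 := Ordinal (ltnW Hi).
    rewrite (bigD1 j0) /=; last by rewrite -(inj_eq val_inj) /= (ltn_eqF (ltnSn i)).
    rewrite !mxE /= -(inj_eq val_inj) /= (gtn_eqF (ltnSn i)) eqxx big1 ?addr0; last first.
      move=> j /andP [Hj1 Hj2]; rewrite !mxE.
      rewrite eq_sym (negbTE Hj1) /=.
      case: ifP => [/eqP h|_]; last by rewrite mul0r.
      by move: Hj2; rewrite -(inj_eq val_inj) /=; move: h => [->]; rewrite eqxx.
    by rewrite /q [d * _]mulrC divzK ?Hd // addSn mulNr.
exists (\det N).
rewrite /hankel_det -/M.
have := congr1 determinant HLM.
by rewrite !det_mulmx HL mul1r det_diag HD.
Qed.

Lemma dvdz_of_mod (d x y c : nat) : (x %% d = (c * y) %% d)%N ->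
  (Posz d %| Posz x - Posz c * Posz y)%Z.
Proof.
move=> h; rewrite -eqz_mod_dvd -PoszM; apply/eqP.
by rewrite !modz_nat h.
Qed.

Lemma apb m : apery_b m = ap 1 m.
Proof. by rewrite /apery_b /ap; apply: eq_bigr => k _; rewrite /T expn1. Qed.

Lemma apA m : apery_A m = ap 2 m.
Proof. by rewrite /apery_A /ap; apply: eq_bigr => k _; rewrite /T. Qed.

Lemma b5 m : (ap 1 m %% 5 = 3 ^ m %% 5)%N.
Proof.
apply: ap_pow => //.
by case=> [|[|[|[|[|r]]]]] //; rewrite /ap unlock.
Qed.

Lemma b2 m : (ap 1 m %% 2 = 1 ^ m %% 2)%N.
Proof.
apply: ap_pow => //.
by case=> [|[|r]] //; rewrite /ap unlock.
Qed.

Lemma A3 m : (ap 2 m %% 3 = 2 ^ m %% 3)%N.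
Proof.
apply: ap_pow => //.
by case=> [|[|[|r]]] //; rewrite /ap unlock.
Qed.

Local Close Scope ring_scope.

Theorem theorem1p3 (n : nat) :
  (exists z : int, hankel_det apery_b n = (Posz (10 ^ n) * z)%R) /\
  (exists z : int, hankel_det apery_A n = (Posz (24 ^ n) * z)%R).
Proof.
split.
- have := @hankel_dvd apery_b 3 10 n.
  rewrite -natrX (natz (10 ^ n)); apply => m.
  apply: (@dvdz_of_mod 10 (apery_b m.+1) (apery_b m) 3).
  rewrite !apb.
  have h1 := b5 m.+1; have h2 := b5 m; have h3 := b2 m.+1; have h4 := b2 m.
  rewrite expnS in h1; rewrite !exp1n in h3 h4.
  move: h1 h2 h3 h4; set P := (3 ^ m)%N; move=> h1 h2 h3 h4; lia.
- have := @hankel_dvd apery_A 5 24 n.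
  rewrite -natrX (natz (24 ^ n)); apply => m.
  apply: (@dvdz_of_mod 24 (apery_A m.+1) (apery_A m) 5).
  rewrite !apA.
  have h1 := A3 m.+1; have h2 := A3 m; have h3 := ap2_mod8 m.+1; have h4 := ap2_mod8 m.
  rewrite expnS in h1; rewrite /= in h3.
  move: h1 h2 h3 h4; set P := (2 ^ m)%N; case: (odd m) => h1 h2 h3 h4.
  all: rewrite /= in h3; lia.
Qed.
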